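(* Let $s\in(0,1)$. There exists a constant $c>0$ depending only on $s$ such that for every finite set $\Gamma\subset\mathbb Z^d$, $$\sum_{i\in\Gamma,\ j\in\mathbb Z^d\setminus\Gamma}\frac{1}{|i-j|_\infty^{d+s}}\ge c\,(\#\Gamma)^{\frac{d-s}{d}}.$$
   Context: $d\ge2$; $|x|_\infty:=\max_n|x_n|$ for $x\in\mathbb Z^d$; $\#\Gamma$ denotes the cardinality of $\Gamma$. *)

(* Defs.v *)
From Stdlib Require Import Reals ZArith List.
Open Scope R_scope.

Definition is_pt (d : nat) (x : list Z) : Prop := length x = d.

Definition linf_dist (x y : list Z) : Z :=
  fold_right Z.max 0%Z (map (fun p => Z.abs (fst p - snd p)) (combine x y)).

(* x^y for x >= 0, with the convention 0^y = 0 (y > 0). *)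
Definition rpow (x y : R) : R :=
  if Rle_dec x 0 then 0 else Rpower x y.

Definition Rsum (l : list R) : R := fold_right Rplus 0 l.

Definition kern (d : nat) (s : R) (i j : list Z) : R :=
  / rpow (IZR (linf_dist i j)) (INR d + s).

(* Finite partial sums of  sum_{i in G, j in Z^d \ G} kern d s i j :
   sums over i in G and j ranging over a finite duplicate-free list L of
   points of Z^d \ G. *)
Definition partial_sums (d : nat) (s : R) (G : list (list Z)) (r : R) : Prop :=
  exists L : list (list Z),
    NoDup L /\ (forall j, In j L -> is_pt d j /\ ~ In j G) /\
    r = Rsum (map (fun i => Rsum (map (fun j => kern d s i j) L)) G).

(* S is the value of the (nonnegative) series: the supremum of its finite
   partial sums (this also asserts convergence). *)
Definition boundary_sum (d : nat) (s : R) (G : list (list Z)) (S : R) : Prop :=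
  is_lub (partial_sums d s G) S.

(* Main.v *)
Require Import Defs.
From Stdlib Require Import Reals ZArith List Lia Lra.
Open Scope R_scope.

Lemma Rsum_app l1 l2 : Rsum (l1 ++ l2) = Rsum l1 + Rsum l2.
Proof. induction l1; simpl; [lra|rewrite IHl1; lra]. Qed.

Lemma Rsum_map_le {A} (f g : A -> R) l :
  (forall x, In x l -> f x <= g x) -> Rsum (map f l) <= Rsum (map g l).
Proof.
  induction l; simpl; intros H; [lra|].
  assert (f a <= g a) by auto. assert (Rsum (map f l) <= Rsum (map g l)) by auto. lra.
Qed.

Lemma Rsum_map_nonneg {A} (f : A -> R) l :
  (forall x, In x l -> 0 <= f x) -> 0 <= Rsum (map f l).
Proof.
  induction l; simpl; intros H; [lra|].
  assert (0 <= f a) by auto. assert (0 <= Rsum (map f l)) by auto. lra.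
Qed.

Lemma Rsum_map_const_le {A} (f : A -> R) l c :
  (forall x, In x l -> c <= f x) -> INR (length l) * c <= Rsum (map f l).
Proof.
  induction l; simpl length; simpl map; intros H; simpl Rsum; [simpl; lra|].
  rewrite S_INR.
  assert (c <= f a) by (apply H; simpl; auto). assert (INR (length l) * c <= Rsum (map f l)) by (apply IHl; intros; apply H; simpl; auto). lra.
Qed.

Lemma Rsum_map_le_const {A} (f : A -> R) l c :
  (forall x, In x l -> f x <= c) -> Rsum (map f l) <= INR (length l) * c.
Proof.
  induction l; simpl length; simpl map; intros H; simpl Rsum; [simpl; lra|].
  rewrite S_INR.
  assert (f a <= c) by (apply H; simpl; auto). assert (Rsum (map f l) <= INR (length l) * c) by (apply IHl; intros; apply H; simpl; auto). lra.
Qed.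

Lemma Rsum_sub {A} (f : A -> R) (B L : list A) :
  NoDup B -> incl B L -> (forall x, In x L -> 0 <= f x) ->
  Rsum (map f B) <= Rsum (map f L).
Proof.
  revert L; induction B as [|a B IH]; intros L HN Hi Hf; simpl.
  - apply Rsum_map_nonneg; auto.
  - inversion HN; subst.
    assert (Ha : In a L) by (apply Hi; simpl; auto).
    destruct (in_split _ _ Ha) as [l1 [l2 ->]].
    assert (Rsum (map f B) <= Rsum (map f (l1 ++ l2))).
    { apply IH; auto.
      - intros x Hx. assert (In x (l1 ++ a :: l2)) by (apply Hi; simpl; auto).
        apply in_app_or in H. apply in_or_app. destruct H as [H|[H|H]]; auto.
        subst; contradiction.
      - intros x Hx; apply Hf. apply in_app_or in Hx; apply in_or_app; simpl; tauto. }
    rewrite !map_app, !Rsum_app in *. simpl.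
    lra.
Qed.

Lemma linf_cons a b x y :
  linf_dist (a :: x) (b :: y) = Z.max (Z.abs (a - b)) (linf_dist x y).
Proof. reflexivity. Qed.

Lemma linf_nonneg x y : (0 <= linf_dist x y)%Z.
Proof.
  revert y; induction x; intros [|b y]; try (unfold linf_dist; simpl; lia).
  all: rewrite ?linf_cons; try specialize (IHx y); try lia.
Qed.

Lemma linf_zero x y : length x = length y -> linf_dist x y = 0%Z -> x = y.
Proof.
  revert y; induction x; intros [|b y] Hl Hd; simpl in Hl; try discriminate; auto.
  rewrite linf_cons in Hd. pose proof (linf_nonneg x y).
  assert (a = b) by lia. assert (linf_dist x y = 0%Z) by lia.
  subst; f_equal; apply IHx; auto.
Qed.

Definition ival (a : Z) (R : nat) : list Z :=
  map (fun k => a - Z.of_nat R + Z.of_nat k)%Z (seq 0 (2*R+1)).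

Lemma ival_len a R : length (ival a R) = (2*R+1)%nat.
Proof. unfold ival; rewrite length_map, length_seq; auto. Qed.

Lemma ival_nodup a R : NoDup (ival a R).
Proof.
  unfold ival. apply NoDup_map_NoDup_ForallPairs; [|apply seq_NoDup].
  intros x y _ _ H; lia.
Qed.

Lemma ival_in a R z : In z (ival a R) <-> (Z.abs (a - z) <= Z.of_nat R)%Z.
Proof.
  unfold ival; rewrite in_map_iff. split.
  - intros [k [<- Hk]]. apply in_seq in Hk. lia.
  - intros H. exists (Z.to_nat (z - a + Z.of_nat R)). rewrite in_seq. split; lia.
Qed.

Fixpoint box (i : list Z) (R : nat) : list (list Z) :=
  match i with
  | nil => nil :: nil
  | a :: i' => flat_map (fun z => map (cons z) (box i' R)) (ival a R)
  end.

Lemma flat_map_len {A B} (f : A -> list B) l n :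
  (forall x, length (f x) = n) -> length (flat_map f l) = (length l * n)%nat.
Proof.
  intros H; induction l; simpl; auto. rewrite length_app, H, IHl; lia.
Qed.

Lemma box_len i R : length (box i R) = ((2*R+1) ^ length i)%nat.
Proof.
  induction i; simpl; auto.
  rewrite (flat_map_len _ _ (length (box i R))).
  - rewrite ival_len, IHi. reflexivity.
  - intros; rewrite length_map; auto.
Qed.

Lemma flat_map_nodup {A B} (f : A -> list B) l :
  NoDup l -> (forall x, NoDup (f x)) ->
  (forall x x' y, In y (f x) -> In y (f x') -> x = x') -> NoDup (flat_map f l).
Proof.
  intros Hl Hf Hd; induction Hl; simpl; [constructor|].
  apply NoDup_app; auto.
  intros y Hy Hy'. apply in_flat_map in Hy'. destruct Hy' as [x' [Hx' Hy']].
  rewrite (Hd _ _ _ Hy Hy') in H. contradiction.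
Qed.

Lemma box_nodup i R : NoDup (box i R).
Proof.
  induction i; simpl; [repeat constructor; simpl; tauto|].
  apply flat_map_nodup; [apply ival_nodup| |].
  - intros z. apply NoDup_map_NoDup_ForallPairs; auto.
    intros x y _ _ H; injection H; auto.
  - intros x x' y H1 H2. apply in_map_iff in H1, H2.
    destruct H1 as [u [<- _]]. destruct H2 as [v [H _]]. injection H; auto.
Qed.

Lemma box_in i R j :
  In j (box i R) <-> length j = length i /\ (linf_dist i j <= Z.of_nat R)%Z.
Proof.
  revert j; induction i as [|a i IH]; intros j; simpl.
  - split.
    + intros [<-|[]]. split; auto. unfold linf_dist; simpl; lia.
    + intros [Hl _]. destruct j; simpl in Hl; try discriminate. auto.
  - rewrite in_flat_map. split.
    + intros [z [Hz Hj]]. apply in_map_iff in Hj. destruct Hj as [j' [<- Hj']].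
      apply IH in Hj'. apply ival_in in Hz. simpl. rewrite linf_cons.
      split; [lia|]. lia.
    + intros [Hl Hd]. destruct j as [|b j]; simpl in Hl; try discriminate.
      rewrite linf_cons in Hd. exists b. split.
      * apply ival_in; lia.
      * apply in_map. apply IH. split; [lia|lia].
Qed.

Lemma count_box i R (L : list (list Z)) :
  NoDup L -> (forall x, In x L -> length x = length i /\ (linf_dist i x <= Z.of_nat R)%Z) ->
  (length L <= (2*R+1) ^ length i)%nat.
Proof.
  intros HN H. rewrite <- box_len. apply NoDup_incl_length; auto.
  intros x Hx. apply box_in; auto.
Qed.

Lemma Rpower_pos x y : 0 < Rpower x y.
Proof. unfold Rpower; apply exp_pos. Qed.

Lemma rpow_pos x y : 0 < x -> rpow x y = Rpower x y.
Proof. intros H; unfold rpow; destruct (Rle_dec x 0); [lra|auto]. Qed.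

Lemma rpow_nonneg x y : 0 <= rpow x y.
Proof. unfold rpow; destruct (Rle_dec x 0); [lra|]. left; apply Rpower_pos. Qed.

Lemma kern_nonneg d s i j : 0 <= kern d s i j.
Proof.
  unfold kern. destruct (rpow_nonneg (IZR (linf_dist i j)) (INR d + s)) as [H|H].
  - left; apply Rinv_0_lt_compat; auto.
  - rewrite <- H, Rinv_0; lra.
Qed.

Lemma sum_ind (p K : nat) (c : nat -> R) :
  sum_f_R0 (fun k => if Nat.eqb p k then c k else 0) K = if Nat.leb p K then c p else 0.
Proof.
  induction K; simpl.
  - destruct p; simpl; auto.
  - rewrite IHK. destruct (Nat.eqb p (S K)) eqn:E.
    + apply Nat.eqb_eq in E; subst. rewrite (proj2 (Nat.leb_gt (S K) K)) by lia.
      rewrite Nat.leb_refl. lra.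
    + apply Nat.eqb_neq in E. destruct (Nat.leb p K) eqn:E1.
      * apply Nat.leb_le in E1. rewrite (proj2 (Nat.leb_le p (S K))) by lia. lra.
      * apply Nat.leb_gt in E1. rewrite (proj2 (Nat.leb_gt p (S K))) by lia. lra.
Qed.

Lemma sum_zero K : sum_f_R0 (fun _ => 0) K = 0.
Proof. induction K; simpl; [auto|rewrite IHK; lra]. Qed.

Lemma exch {A} (F : A -> nat -> R) L K :
  Rsum (map (fun x => sum_f_R0 (F x) K) L) =
  sum_f_R0 (fun k => Rsum (map (fun x => F x k) L)) K.
Proof.
  induction L; simpl.
  - rewrite sum_zero; auto.
  - rewrite IHL. rewrite <- sum_plus. auto.
Qed.

Lemma Rsum_ind {A} (P : A -> bool) (c : R) L :
  Rsum (map (fun x => if P x then c else 0) L) = c * INR (length (filter P L)).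
Proof.
  induction L; simpl; [lra|]. rewrite IHL. destruct (P a); [cbn [filter length]; rewrite S_INR; ring|ring].
Qed.

Lemma geom_bound q K : 0 <= q < 1 -> sum_f_R0 (fun k => q ^ k) K <= / (1 - q).
Proof.
  intros Hq. pose proof (GP_finite q K).
  assert (0 <= q ^ (K+1)) by (apply pow_le; lra).
  apply (Rmult_le_reg_r (1 - q)); [lra|]. rewrite Rinv_l by lra. nra.
Qed.

Lemma upper (d : nat) (s : R) : 0 < s -> exists B, forall i L,
  length i = d -> NoDup L -> (forall j, In j L -> length j = d /\ j <> i) ->
  Rsum (map (kern d s i) L) <= B.
Proof.
  intros Hs.
  set (q := / Rpower 2 s).
  assert (Hq1 : 1 < Rpower 2 s).
  { rewrite <- (Rpower_O 2) by lra. apply Rpower_lt; lra. }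
  assert (Hq : 0 < q < 1).
  { unfold q; split; [apply Rinv_0_lt_compat; lra|].
    rewrite <- Rinv_1. apply Rinv_lt_contravar; lra. }
  exists (8 ^ d * / (1 - q)).
  intros i L Hi HN HL.
  set (r := fun j => linf_dist i j).
  assert (Hr : forall j, In j L -> (1 <= r j)%Z).
  { intros j Hj. destruct (HL j Hj) as [Hl Hne]. pose proof (linf_nonneg i j).
    destruct (Z.eq_dec (linf_dist i j) 0) as [E|E].
    - exfalso; apply Hne; symmetry; apply linf_zero; auto; lia.
    - unfold r; lia. }
  set (m := fun j => Z.to_nat (Z.log2 (r j))).
  assert (Hm : forall j, In j L ->
     (2 ^ Z.of_nat (m j) <= r j < 2 ^ (Z.of_nat (m j) + 1))%Z).
  { intros j Hj. pose proof (Hr j Hj). pose proof (Z.log2_spec (r j) ltac:(lia)).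
    pose proof (Z.log2_nonneg (r j)). unfold m. rewrite Z2Nat.id by lia.
    rewrite Z.add_1_r; auto. }
  set (a := fun k : nat => / Rpower (2 ^ k) (INR d + s)).
  set (K := list_max (map m L)).
  assert (HK : forall j, In j L -> (m j <= K)%nat).
  { intros j Hj. unfold K. pose proof (proj1 (list_max_le (map m L) _) (le_n _)).
    rewrite Forall_forall in H. apply H. apply in_map; auto. }
  assert (Hpow2 : forall k, 0 < 2 ^ k) by (intros; apply pow_lt; lra).
  apply Rle_trans with
    (Rsum (map (fun x => sum_f_R0 (fun k => if Nat.eqb (m x) k then a k else 0) K) L)).
  { apply Rsum_map_le. intros x Hx. rewrite sum_ind.
    rewrite (proj2 (Nat.leb_le _ _) (HK x Hx)).
    unfold kern, a. pose proof (Hr x Hx). pose proof (Hm x Hx).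
    fold (r x). rewrite rpow_pos by (apply IZR_lt; lia).
    apply Rinv_le_contravar; [apply Rpower_pos|].
    apply Rle_Rpower_l; [pose proof (pos_INR d); lra|].
    split; [apply Hpow2|]. replace 2 with (IZR 2) by reflexivity.
    rewrite pow_IZR. apply IZR_le; lia. }
  rewrite exch.
  apply Rle_trans with (sum_f_R0 (fun k => 8 ^ d * q ^ k) K).
  2:{ replace (sum_f_R0 (fun k => 8 ^ d * q ^ k) K) with (8 ^ d * sum_f_R0 (fun k => q ^ k) K).
      2:{ rewrite scal_sum. apply sum_eq. intros; ring. }
      apply Rmult_le_compat_l; [apply pow_le; lra|]. apply geom_bound; lra. }
  apply sum_Rle. intros k _.
  rewrite (Rsum_ind (fun x => Nat.eqb (m x) k)).
  assert (Hc : (length (filter (fun x => Nat.eqb (m x) k) L) <= (2 * 2^(k+1) + 1) ^ d)%nat).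
  { rewrite <- Hi. apply count_box; [apply NoDup_filter; auto|].
    intros x Hx. apply filter_In in Hx. destruct Hx as [Hx E].
    apply Nat.eqb_eq in E. split; [rewrite Hi; apply HL; auto|].
    pose proof (Hm x Hx). rewrite E in H. fold (r x). rewrite Nat2Z.inj_pow.
    rewrite Nat2Z.inj_add in *. simpl (Z.of_nat 2). lia. }
  apply le_INR in Hc.
  assert (Ha : 0 < a k) by (unfold a; apply Rinv_0_lt_compat, Rpower_pos).
  apply Rle_trans with (a k * (8 * 2 ^ k) ^ d).
  { apply Rmult_le_compat_l; [lra|]. eapply Rle_trans; [apply Hc|].
    rewrite pow_INR. apply pow_incr. split; [apply pos_INR|].
    rewrite plus_INR, mult_INR, pow_INR. simpl (INR 2). simpl (INR 1).
    rewrite pow_add. pose proof (pow_R1_Rle 2 k ltac:(lra)). simpl (2 ^ 1). replace (1+1) with 2 by lra. rewrite pow_1. nra. }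
  unfold a. rewrite Rpower_plus, Rpower_pow by apply Hpow2.
  assert (E : Rpower (2 ^ k) s = / q ^ k).
  { unfold q. rewrite pow_inv, Rinv_inv.
    rewrite <- (Rpower_pow k 2) by lra. rewrite Rpower_mult, Rmult_comm, <- Rpower_mult.
    rewrite Rpower_pow by (apply Rpower_pos). auto. }
  rewrite E. rewrite Rpow_mult_distr.
  assert (0 < q ^ k) by (apply pow_lt; lra).
  assert (0 < (2 ^ k) ^ d) by (apply pow_lt; auto).
  right. field. split; lra.
Qed.

Definition notinG (G : list (list Z)) (j : list Z) : bool :=
  if in_dec (list_eq_dec Z.eq_dec) j G then false else true.

Lemma dist_ge1 i j : length i = length j -> i <> j -> (1 <= linf_dist i j)%Z.
Proof.
  intros Hl Hne. pose proof (linf_nonneg i j).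
  destruct (Z.eq_dec (linf_dist i j) 0) as [E|E]; [|lia].
  exfalso; apply Hne; apply linf_zero; auto.
Qed.

Lemma lower_i (d : nat) (s : R) (G : list (list Z)) (R : nat) (i : list Z) :
  (2 <= d)%nat -> 0 < s -> NoDup G -> In i G -> length i = d ->
  INR (length G) <= INR R ^ d -> 0 < INR R ->
  / Rpower (INR R) s <= Rsum (map (kern d s i) (filter (notinG G) (box i R))).
Proof.
  intros Hd Hs HN HiG Hi Hn HR.
  set (Li := filter (notinG G) (box i R)).
  assert (Hlen : INR R ^ d <= INR (length Li)).
  { pose proof (filter_length (notinG G) (box i R)) as E.
    rewrite box_len, Hi in E.
    assert (Hc : (length (filter (fun x => negb (notinG G x)) (box i R)) <= length G)%nat).
    { apply NoDup_incl_length; [apply NoDup_filter, box_nodup|].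
      intros x Hx. apply filter_In in Hx. destruct Hx as [_ Hx]. unfold notinG in Hx.
      destruct (in_dec _ x G); simpl in Hx; auto; discriminate. }
    apply le_INR in Hc. apply (f_equal INR) in E. rewrite plus_INR, pow_INR in E.
    rewrite plus_INR, mult_INR in E. simpl (INR 2) in E. simpl (INR 1) in E.
    assert (H3 : (2 * INR R) ^ d <= ((1+1) * INR R + 1) ^ d).
    { apply pow_incr. lra. }
    rewrite Rpow_mult_distr in H3.
    assert (H4 : 2 <= 2 ^ d).
    { replace d with (S (d - 1)) by lia. simpl. pose proof (pow_R1_Rle 2 (d-1) ltac:(lra)). lra. }
    assert (0 <= INR R ^ d) by (apply pow_le; lra).
    fold Li in E. nra. }
  assert (Hk : forall j, In j Li -> / Rpower (INR R) (INR d + s) <= kern d s i j).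
  { intros j Hj. unfold Li in Hj. apply filter_In in Hj. destruct Hj as [Hb Hg].
    apply box_in in Hb. destruct Hb as [Hl Hdist].
    assert (Hne : i <> j).
    { intros <-. unfold notinG in Hg. destruct (in_dec _ i G); [discriminate|contradiction]. }
    pose proof (dist_ge1 i j ltac:(lia) Hne).
    unfold kern. rewrite rpow_pos by (apply IZR_lt; lia).
    apply Rinv_le_contravar; [apply Rpower_pos|].
    apply Rle_Rpower_l; [pose proof (pos_INR d); lra|].
    split; [apply IZR_lt; lia|]. rewrite INR_IZR_INZ. apply IZR_le; lia. }
  eapply Rle_trans; [|apply Rsum_map_const_le; exact Hk].
  rewrite Rpower_plus, Rpower_pow by auto.
  assert (0 < INR R ^ d) by (apply pow_lt; auto).
  pose proof (Rpower_pos (INR R) s).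
  apply Rle_trans with (INR R ^ d * / (INR R ^ d * Rpower (INR R) s)).
  - right. field. lra.
  - apply Rmult_le_compat_r; [|auto]. left; apply Rinv_0_lt_compat. nra.
Qed.

Theorem mainTheorem11 (d : nat) (hd : (2 <= d)%nat) (s : R) (hs : 0 < s < 1) :
  exists c : R, 0 < c /\
    forall G : list (list Z), NoDup G -> Forall (is_pt d) G ->
      exists S : R, boundary_sum d s G S /\
        S >= c * rpow (INR (length G)) ((INR d - s) / INR d).
Proof.
  destruct (upper d s ltac:(lra)) as [B HB].
  exists (1/2). split; [lra|].
  intros G HN HF. rewrite Forall_forall in HF. unfold is_pt in HF.
  assert (Hbd : bound (partial_sums d s G)).
  { exists (INR (length G) * B). intros r [L [HL [HLp ->]]].
    apply Rsum_map_le_const. intros i Hi. apply HB; auto.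
    intros j Hj. destruct (HLp j Hj) as [Hl Hn]. split; auto.
    intros ->; contradiction. }
  assert (Hne : exists r, partial_sums d s G r).
  { eexists. exists nil. split; [constructor|]. split; [intros j []|reflexivity]. }
  destruct (completeness _ Hbd Hne) as [S HS].
  exists S. split; [exact HS|].
  assert (Hub : forall r, partial_sums d s G r -> r <= S) by (apply HS).
  assert (HdR : 2 <= INR d) by (replace 2 with (INR 2) by (simpl; lra); apply le_INR; auto).
  destruct G as [|g G'] eqn:EG.
  - simpl. unfold rpow. destruct (Rle_dec 0 0); [|lra].
    assert (0 <= S); [|lra].
    apply Hub. exists nil. split; [constructor|]. split; [intros j []|reflexivity].
  - rewrite <- EG in *. set (n := length G).
    assert (Hn1 : 1 <= INR n).
    { replace 1 with (INR 1) by reflexivity. apply le_INR. unfold n; rewrite EG; simpl; lia. }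
    set (x := Rpower (INR n) (/ INR d)).
    assert (Hx1 : 1 <= x).
    { unfold x. rewrite <- (Rpower_O (INR n)) by lra. apply Rle_Rpower; auto.
      left; apply Rinv_0_lt_compat; lra. }
    assert (Hxd : x ^ d = INR n).
    { unfold x. rewrite <- Rpower_pow by (apply Rpower_pos).
      rewrite Rpower_mult, Rinv_l by lra. apply Rpower_1; lra. }
    destruct (archimed x) as [Hz1 Hz2].
    set (R := Z.to_nat (up x)).
    assert (HRz : INR R = IZR (up x)).
    { unfold R. rewrite INR_IZR_INZ, Z2Nat.id; auto.
      apply le_IZR. lra. }
    assert (HR0 : 0 < INR R) by lra.
    assert (HRn : INR n <= INR R ^ d).
    { rewrite <- Hxd. apply pow_incr. lra. }
    set (Li := fun i => filter (notinG G) (box i R)).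
    set (L := nodup (list_eq_dec Z.eq_dec) (flat_map Li G)).
    assert (HP : partial_sums d s G
       (Rsum (map (fun i => Rsum (map (fun j => kern d s i j) L)) G))).
    { exists L. split; [apply NoDup_nodup|]. split; [|reflexivity].
      intros j Hj. unfold L in Hj. rewrite nodup_In, in_flat_map in Hj.
      destruct Hj as [i [Hi Hj]]. unfold Li in Hj. apply filter_In in Hj.
      destruct Hj as [Hb Hg]. apply box_in in Hb. unfold is_pt. split.
      - rewrite (proj1 Hb). apply HF; auto.
      - unfold notinG in Hg. destruct (in_dec _ j G); [discriminate|auto]. }
    apply Hub in HP.
    assert (Hterm : forall i, In i G ->
       / (2 * Rpower (INR n) (/ INR d * s)) <= Rsum (map (fun j => kern d s i j) L)).
    { intros i Hi.
      eapply Rle_trans; [|apply (Rsum_sub (kern d s i) (Li i))].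
      - eapply Rle_trans; [|apply (lower_i d s G R i); auto; lra].
        apply Rinv_le_contravar; [apply Rpower_pos|].
        rewrite <- Rpower_mult. fold x.
        apply Rle_trans with (Rpower (2 * x) s).
        + apply Rle_Rpower_l; lra.
        + rewrite <- Rpower_mult_distr by lra.
          apply Rmult_le_compat_r; [left; apply Rpower_pos|].
          rewrite <- (Rpower_1 2) at 2 by lra. apply Rle_Rpower; lra.
      - apply NoDup_filter, box_nodup.
      - intros j Hj. unfold L. rewrite nodup_In, in_flat_map. eauto.
      - intros; apply kern_nonneg. }
    apply Rle_ge. eapply Rle_trans; [|exact HP].
    eapply Rle_trans; [|apply Rsum_map_const_le; exact Hterm].
    fold n. rewrite rpow_pos by lra.
    replace ((INR d - s) / INR d) with (1 + - (/ INR d * s)) by (field; lra).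
    rewrite Rpower_plus, Rpower_1, Rpower_Ropp by lra.
    pose proof (Rpower_pos (INR n) (/ INR d * s)).
    right. field. lra.
Qed.
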